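(* Let $d\ge2$ and let $Q$ be a qplex whose set of extreme points forms a single orbit under the action $q\mapsto Rq$ of its preservation group $\mathcal{G}(Q)$. Then $\mathcal{G}(Q)$ is a strongly maximal stochastic subgroup of $\mathrm{O}(d^2)$.
   Context: Fix an integer $d\ge 2$. $\mathrm{O}(d^2)$ is the group of real orthogonal $d^2\times d^2$ matrices. $\langle\cdot,\cdot\rangle$ is the standard inner product on $\mathbb{R}^{d^2}$, $\|\cdot\|$ the Euclidean norm; $\overline{\mathrm{conv}}$ denotes closed convex hull. $\Delta=\{p\in\mathbb{R}^{d^2}: p(i)\ge0,\ \sum_ip(i)=1\}$; $H=\{u\in\mathbb{R}^{d^2}:\sum_i u(i)=1\}$; $c=(1/d^2,\dots,1/d^2)$. For $A\subseteq H$ the polar is $A^*=\{u\in H:\langle u,v\rangle\ge\frac{1}{d(d+1)}\ \forall v\in A\}$. Out-ball $B_{\rm o}=\{u\in H:\|u-c\|\le r_{\rm o}\}$, $r_{\rm o}^2=\frac{d-1}{d^2(d+1)}$. A qplex is a set $Q\subseteq\Delta\cap B_{\rm o}$ with $Q^*=Q$. A measurement is an array $r(i|j)\ge0$ with $\sum_i r(i|j)=1$ for every $j$; for $q\in Q$, $q_r(i)=\sum_j[(d+1)q(j)-\frac1d]r(i|j)$; it is $Q$-preserving if $\{q_r:q\in Q\}=Q$; its stretched measurement matrix is $R_{ij}=(d+1)r(i|j)-\frac1d\sum_k r(i|k)$. The preservation group $\mathcal{G}(Q)$ is the set of stretched measurement matrices of $Q$-preserving measurements. A subgroup $\mathcal{G}\subseteq\mathrm{O}(d^2)$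 is stochastic if every $R\in\mathcal{G}$ satisfies $R_{ij}\ge-\frac1d$ for all $i,j$ and $Rc=c$. For $R\in\mathcal{G}$ set $s^R_i(j)=\frac{dR_{ij}+1}{d(d+1)}$; the orbital germ of $\mathcal{G}$ is $\{s^R_i: R\in\mathcal{G},\ i=1,\dots,d^2\}$. A stochastic subgroup is maximal if it is not contained in any strictly larger stochastic subgroup, and strongly maximal if it is maximal and the closed convex hull of its orbital germ is a qplex. *)

(* Defs.v *)
From Stdlib Require Import Reals.
From mathcomp Require Import all_boot.

Set Implicit Arguments.
Unset Strict Implicit.
Unset Printing Implicit Defensive.

Local Open Scope R_scope.

Definition Idx (d : nat) := 'I_(d * d)%N.
Definition Vec (d : nat) := Idx d -> R.
Definition Mat (d : nat) := Idx d -> Idx d -> R.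

Definition sumR (n : nat) (f : 'I_n -> R) : R := \big[Rplus/0]_(i < n) f i.

Definition dR (d : nat) : R := INR d.

Definition inner (d : nat) (u v : Vec d) : R := sumR (fun i => u i * v i).
Definition norm (d : nat) (u : Vec d) : R := sqrt (inner u u).
Definition vsub (d : nat) (u v : Vec d) : Vec d := fun i => u i - v i.

Definition cvec (d : nat) : Vec d := fun _ => 1 / (dR d * dR d).

Definition Simplex (d : nat) (p : Vec d) : Prop :=
  (forall i, 0 <= p i) /\ sumR p = 1.
Definition Hplane (d : nat) (u : Vec d) : Prop := sumR u = 1.

Definition polar (d : nat) (A : Vec d -> Prop) : Vec d -> Prop :=
  fun u => Hplane u /\ forall v, A v -> inner u v >= 1 / (dR d * (dR d + 1)).

Definition ro2 (d : nat) : R := (dR d - 1) / (dR d * dR d * (dR d + 1)).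
Definition outball (d : nat) (u : Vec d) : Prop :=
  Hplane u /\ norm (vsub u (@cvec d)) <= sqrt (ro2 d).

Definition qplex (d : nat) (Q : Vec d -> Prop) : Prop :=
  (forall q, Q q -> Simplex q /\ outball q) /\
  (forall u, polar Q u <-> Q u).

(* measurements r(i|j) = r i j *)
Definition measurement (d : nat) (r : Mat d) : Prop :=
  (forall i j, 0 <= r i j) /\ (forall j, sumR (fun i => r i j) = 1).

Definition q_r (d : nat) (r : Mat d) (q : Vec d) : Vec d :=
  fun i => sumR (fun j => ((dR d + 1) * q j - 1 / dR d) * r i j).

Definition Q_preserving (d : nat) (Q : Vec d -> Prop) (r : Mat d) : Prop :=
  forall p, Q p <-> exists q, Q q /\ p = q_r r q.

Definition stretched (d : nat) (r : Mat d) : Mat d :=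
  fun i j => (dR d + 1) * r i j - 1 / dR d * sumR (fun k => r i k).

Definition pres_group (d : nat) (Q : Vec d -> Prop) : Mat d -> Prop :=
  fun M => exists r, measurement r /\ Q_preserving Q r /\ M = stretched r.

Definition mmul (d : nat) (A B : Mat d) : Mat d :=
  fun i j => sumR (fun k => A i k * B k j).
Definition mtr (d : nat) (A : Mat d) : Mat d := fun i j => A j i.
Definition mid (d : nat) : Mat d := fun i j => if i == j then 1 else 0.
Definition mapply (d : nat) (A : Mat d) (v : Vec d) : Vec d :=
  fun i => sumR (fun j => A i j * v j).

Definition orthogonal (d : nat) (A : Mat d) : Prop := mmul (mtr A) A = @mid d.

Definition subgroupO (d : nat) (G : Mat d -> Prop) : Prop :=
  (forall A, G A -> orthogonal A) /\
  G (@mid d) /\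
  (forall A B, G A -> G B -> G (mmul A B)) /\
  (forall A, G A -> G (mtr A)).

Definition stochastic (d : nat) (G : Mat d -> Prop) : Prop :=
  subgroupO G /\
  forall A, G A -> (forall i j, A i j >= - (1 / dR d)) /\ mapply A (@cvec d) = @cvec d.

Definition maximal_stochastic (d : nat) (G : Mat d -> Prop) : Prop :=
  stochastic G /\
  ~ (exists G' : Mat d -> Prop, stochastic G' /\ (forall A, G A -> G' A) /\
                                (exists A, G' A /\ ~ G A)).

Definition orbital_germ (d : nat) (G : Mat d -> Prop) : Vec d -> Prop :=
  fun s => exists A i, G A /\
    s = (fun j => (dR d * A i j + 1) / (dR d * (dR d + 1))).

Definition conv_hull (d : nat) (A : Vec d -> Prop) : Vec d -> Prop :=
  fun v => exists (n : nat) (w : 'I_n -> R) (a : 'I_n -> Vec d),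
    (forall k, 0 <= w k) /\ sumR w = 1 /\ (forall k, A (a k)) /\
    v = (fun i => sumR (fun k => w k * a k i)).

Definition closure (d : nat) (A : Vec d -> Prop) : Vec d -> Prop :=
  fun v => forall eps, 0 < eps -> exists u, A u /\ norm (vsub v u) < eps.

Definition closed_conv_hull (d : nat) (A : Vec d -> Prop) : Vec d -> Prop :=
  closure (conv_hull A).

Definition strongly_maximal (d : nat) (G : Mat d -> Prop) : Prop :=
  maximal_stochastic G /\ qplex (closed_conv_hull (orbital_germ G)).

Definition extreme_point (d : nat) (Q : Vec d -> Prop) (q : Vec d) : Prop :=
  Q q /\ forall a b t, Q a -> Q b -> 0 < t < 1 ->
    q = (fun i => t * a i + (1 - t) * b i) -> a = q /\ b = q.

Definition single_orbit (d : nat) (G : Mat d -> Prop) (Q : Vec d -> Prop) : Prop :=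
  exists q0, extreme_point Q q0 /\
    forall q, extreme_point Q q <-> exists A, G A /\ q = mapply A q0.

(* Main.v *)
Require Import Defs.
From Stdlib Require Import Reals Lra FunctionalExtensionality.
From mathcomp Require Import all_boot all_algebra.
From mathcomp Require Import Rstruct.
Import GRing.Theory.

Set Implicit Arguments.
Unset Strict Implicit.
Unset Printing Implicit Defensive.

Local Open Scope R_scope.



Section Sums.
Variable n : nat.
Implicit Types f g : 'I_n -> R.

Lemma sumR_add f g : sumR (fun i => f i + g i) = sumR f + sumR g.
Proof. exact: big_split. Qed.

Lemma sumR_scal c f : sumR (fun i => c * f i) = c * sumR f.
Proof. symmetry; exact: mulr_sumr. Qed.

Lemma sumR_scalr c f : sumR (fun i => f i * c) = sumR f * c.
Proof. symmetry; exact: mulr_suml. Qed.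

Lemma sumR_ext f g : (forall i, f i = g i) -> sumR f = sumR g.
Proof. move=> H; rewrite /sumR; apply: eq_bigr => i _; exact: H. Qed.

Lemma sumR_opp f : sumR (fun i => - f i) = - sumR f.
Proof. exact: sumrN. Qed.

Lemma sumR_sub f g : sumR (fun i => f i - g i) = sumR f - sumR g.
Proof.
rewrite (sumR_ext (g := fun i => f i + (- g i))) // sumR_add sumR_opp //.
Qed.

Lemma sumR_const c : sumR (fun _ : 'I_n => c) = INR n * c.
Proof.
rewrite /sumR big_const_ord.
elim: n => [|m IH]; first by rewrite /= Rmult_0_l.
rewrite S_INR /= IH.
change (c + INR m * c = (INR m + 1) * c); ring.
Qed.

Lemma sumR_ge0 f : (forall i, 0 <= f i) -> 0 <= sumR f.
Proof.
move=> H; rewrite /sumR; apply: big_ind => [|x y hx hy|i _].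
- exact: Rle_refl.
- change (0 <= x + y); lra.
- exact: H.
Qed.

Lemma sumR_le f g : (forall i, f i <= g i) -> sumR f <= sumR g.
Proof.
move=> H; have : 0 <= sumR (fun i => g i - f i) by apply: sumR_ge0 => i; move: (H i); lra.
rewrite sumR_sub; lra.
Qed.

Lemma sumR_term_le f i : (forall j, 0 <= f j) -> f i <= sumR f.
Proof.
move=> H; rewrite /sumR (bigD1 i) //=.
have : 0 <= \big[Rplus/0]_(j < n | j != i) f j.
  apply: big_ind => [|x y hx hy|j _].
  - exact: Rle_refl.
  - change (0 <= x + y); lra.
  - exact: H.
change (0 <= \big[Rplus/0]_(j < n | j != i) f j -> f i <= f i + \big[Rplus/0]_(j < n | j != i) f j).
lra.
Qed.

Lemma sumR_eq0 f : (forall j, 0 <= f j) -> sumR f = 0 -> forall i, f i = 0.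
Proof.
move=> H S i; have := sumR_term_le i H; have := H i; lra.
Qed.

Lemma sumR_delta f i : sumR (fun j => (if j == i then 1 else 0) * f j) = f i.
Proof.
rewrite /sumR (bigD1 i) //= eqxx big1 /=.
- change (1 * f i + 0 = f i); ring.
- move=> j /negbTE ->; change (0 * f j = 0); ring.
Qed.

Lemma sumR_delta' f i : sumR (fun j => (if i == j then 1 else 0) * f j) = f i.
Proof. rewrite -(sumR_delta f i); apply: sumR_ext => j; by rewrite eq_sym. Qed.

End Sums.

Lemma sumR_swap n m (F : 'I_n -> 'I_m -> R) :
  sumR (fun i => sumR (fun j => F i j)) = sumR (fun j => sumR (fun i => F i j)).
Proof. rewrite /sumR; exact: exchange_big. Qed.

Lemma sumR_ord1 (F : 'I_1 -> R) : sumR F = F ord0.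
Proof. exact: big_ord1. Qed.

Lemma sumR_split_ord n m (F : 'I_(n + m) -> R) :
  sumR F = sumR (fun j => F (lshift m j)) + sumR (fun j => F (rshift n j)).
Proof. exact: big_split_ord. Qed.





Definition kk (d : nat) : R := 1 / (dR d * (dR d + 1)).
Definition vcomb (d : nat) (t : R) (a b : Vec d) : Vec d := fun i => t * a i + (1 - t) * b i.
Definition fvec (d : nat) (i : Idx d) : Vec d :=
  fun j => (dR d * (@mid d) i j + 1) / (dR d * (dR d + 1)).

Lemma inner_sym d (u v : Vec d) : inner u v = inner v u.
Proof. rewrite /inner; apply: sumR_ext => i; ring. Qed.

Lemma inner_ge0 d (u : Vec d) : 0 <= inner u u.
Proof. apply: sumR_ge0 => i; nra. Qed.

Lemma inner_eq0 d (a b : Vec d) : inner (vsub a b) (vsub a b) <= 0 -> a = b.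
Proof.
move=> H; apply: functional_extensionality => i.
have H0 : inner (vsub a b) (vsub a b) = 0 by have := inner_ge0 (vsub a b); lra.
have := sumR_eq0 (f := fun i => vsub a b i * vsub a b i) (fun j => ltac:(nra)) H0 i.
rewrite /vsub => E; nra.
Qed.

Lemma inner_vsub d (a b : Vec d) :
  inner (vsub a b) (vsub a b) = inner a a + inner b b - 2 * inner a b.
Proof.
rewrite /inner -sumR_scal -sumR_add -sumR_sub; apply: sumR_ext => i; rewrite /vsub; ring.
Qed.

Lemma inner_vcomb_r d (w a b : Vec d) t :
  inner w (vcomb t a b) = t * inner w a + (1 - t) * inner w b.
Proof.
rewrite /inner -!sumR_scal -sumR_add; apply: sumR_ext => i; rewrite /vcomb; ring.
Qed.

Lemma inner_vcomb d (a b : Vec d) t :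
  inner (vcomb t a b) (vcomb t a b) =
  t * inner a a + (1 - t) * inner b b - t * (1 - t) * inner (vsub a b) (vsub a b).
Proof.
rewrite /inner -!sumR_scal -sumR_add -sumR_sub; apply: sumR_ext => i.
rewrite /vcomb /vsub; ring.
Qed.

Lemma sumR_vcomb d (a b : Vec d) t : sumR (vcomb t a b) = t * sumR a + (1 - t) * sumR b.
Proof. rewrite -!sumR_scal -sumR_add; apply: sumR_ext => i; by []. Qed.

Section QFacts.
Variable d : nat.
Hypothesis hd : (2 <= d)%N.
Variable Q : Vec d -> Prop.
Hypothesis hQ : qplex Q.
Local Notation N := (dR d).

Lemma N_ge2 : 2 <= N.
Proof. rewrite /dR; have := le_INR 2 d; move/leP: hd => h; move=> /(_ h) /=; lra. Qed.

Lemma nN : INR (d * d) = N * N.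
Proof. by rewrite mult_INR. Qed.

Lemma kk_pos : 0 < kk d.
Proof. have := N_ge2; rewrite /kk => h; apply: Rdiv_lt_0_compat; nra. Qed.

Lemma Q_simplex q : Q q -> (forall i, 0 <= q i) /\ sumR q = 1.
Proof. by case: hQ => H _ /H [[]]. Qed.

Lemma Q_norm q : Q q -> inner q q <= 2 * kk d.
Proof.
case: hQ => H _ /H [[_ S] [_ B]].
have h2 := N_ge2.
have ro0 : 0 <= ro2 d by rewrite /ro2; apply: Rmult_le_pos; [lra| apply: Rlt_le; apply: Rinv_0_lt_compat; nra].
have B' : inner (vsub q (@cvec d)) (vsub q (@cvec d)) <= ro2 d.
  by apply: sqrt_le_0 => //; apply: inner_ge0.
rewrite inner_vsub in B'.
have E1 : inner q (@cvec d) = 1 / (N * N).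
  by rewrite /inner /cvec sumR_scalr S; field; lra.
have E2 : inner (@cvec d) (@cvec d) = 1 / (N * N).
  by rewrite /inner /cvec sumR_const nN; field; lra.
rewrite E1 E2 /ro2 in B'; rewrite /kk.
have : (N - 1) / (N * N * (N + 1)) + 1 / (N * N) = 2 * (1 / (N * (N + 1))) by field; lra.
lra.
Qed.

Lemma Q_inner_lb p q : Q p -> Q q -> inner p q >= kk d.
Proof. case: hQ => _ H /H [_ P] Hq; exact: P. Qed.

Lemma Q_inner_ub p q : Q p -> Q q -> inner p q <= 2 * kk d.
Proof.
move=> hp hq; have := inner_ge0 (vsub p q); rewrite inner_vsub.
have := Q_norm hp; have := Q_norm hq; lra.
Qed.

Lemma Q_intro u : sumR u = 1 -> (forall v, Q v -> inner u v >= kk d) -> Q u.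
Proof. case: hQ => _ H h1 h2; apply/H; split => //. Qed.

Lemma inner_fvec (i : Idx d) (q : Vec d) : inner (fvec i) q = (N * q i + sumR q) / (N * (N + 1)).
Proof.
have h2 := N_ge2.
rewrite /inner /fvec.
rewrite (sumR_ext (g := fun j => (N / (N * (N+1))) * ((if i == j then 1 else 0) * q j) +
   (1 / (N * (N+1))) * q j)); last by move=> j; rewrite /mid; field; lra.
rewrite sumR_add !sumR_scal sumR_delta'; field; lra.
Qed.

Lemma sum_fvec (i : Idx d) : sumR (fvec i) = 1.
Proof.
have h2 := N_ge2.
rewrite /fvec (sumR_ext (g := fun j => (N / (N * (N+1))) * ((if i == j then 1 else 0) * 1) +
   (1 / (N * (N+1))))); last by move=> j; rewrite /mid; field; lra.
rewrite sumR_add sumR_scal sumR_delta' sumR_const nN; field; lra.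
Qed.

Lemma fvec_norm (i : Idx d) : inner (fvec i) (fvec i) = 2 * kk d.
Proof.
have h2 := N_ge2.
rewrite inner_fvec sum_fvec /fvec /mid eqxx /kk; field; lra.
Qed.

Lemma fvec_in_Q (i : Idx d) : Q (fvec i).
Proof.
have h2 := N_ge2.
apply: Q_intro; first exact: sum_fvec.
move=> v hv; rewrite inner_fvec; case: (Q_simplex hv) => P S; rewrite S /kk.
have := P i => hp.
apply: Rle_ge; apply: Rmult_le_compat_r; first by apply: Rlt_le; apply: Rinv_0_lt_compat; nra.
nra.
Qed.

Lemma maxnorm_extreme q : Q q -> inner q q = 2 * kk d -> extreme_point Q q.
Proof.
move=> hq E; split => // a b t ha hb ht Eq.
have Eq' : q = vcomb t a b by [].
rewrite Eq' inner_vcomb in E.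
have := Q_norm ha; have := Q_norm hb; have := inner_ge0 (vsub a b) => g0 na nb.
have hab : inner (vsub a b) (vsub a b) <= 0.
  case: ht => t0 t1.
  have : t * (1 - t) * inner (vsub a b) (vsub a b) <= 0 by nra.
  have tp : 0 < t * (1 - t) by nra.
  nra.
have ab := inner_eq0 hab; subst b.
split => //; rewrite Eq; apply: functional_extensionality => i; ring.
Qed.

End QFacts.




Section Lim.
Variable d : nat.

Lemma inner_expand (h w : Vec d) t s :
  inner (fun i => t * h i + s * w i) (fun i => t * h i + s * w i) =
  t * t * inner h h + 2 * t * s * inner h w + s * s * inner w w.
Proof.
rewrite /inner -!sumR_scal -!sumR_add; apply: sumR_ext => i; ring.
Qed.

Lemma inner_small (w : Vec d) eps : 0 < eps ->
  exists del, 0 < del /\ forall h : Vec d, inner h h < del -> Rabs (inner h w) < eps.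
Proof.
move=> he; set W := inner w w.
have W0 : 0 <= W := inner_ge0 w.
exists (eps * eps / (2 * (W + 1))); split.
  apply: Rdiv_lt_0_compat; nra.
move=> h hh; set H := inner h h in hh *; set X := inner h w.
set t := 2 * (W + 1) / eps.
have tp : 0 < t by apply: Rdiv_lt_0_compat; lra.
have e1 := inner_ge0 (fun i => t * h i + 1 * w i).
have e2 := inner_ge0 (fun i => t * h i + (-1) * w i).
rewrite inner_expand -/H -/X -/W in e1; rewrite inner_expand -/H -/X -/W in e2.
have Ht : t * t * H < 2 * (W + 1).
  have : t * t * (eps * eps / (2 * (W + 1))) = 2 * (W + 1) by rewrite /t; field; lra.
  move=> <-; apply: Rmult_lt_compat_l => //; nra.
have teps : t * eps = 2 * (W + 1) by rewrite /t; field; lra.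
apply: Rabs_def1.
- have : 2 * t * X < 2 * t * eps by nra.
  move=> h'; nra.
- have : 2 * t * (- X) < 2 * t * eps by nra.
  move=> h'; nra.
Qed.

Lemma norm_lt_sq (x : Vec d) del : 0 < del -> norm x < sqrt del -> inner x x < del.
Proof. move=> hd h; apply: sqrt_lt_0 => //; [exact: inner_ge0| lra]. Qed.

Lemma sq_lt_norm (x : Vec d) e : 0 < e -> inner x x < e * e -> norm x < e.
Proof.
move=> he h; rewrite /norm -(sqrt_square e); last lra.
apply: sqrt_lt_1 => //; [exact: inner_ge0|nra].
Qed.

Lemma inner_vsub_l (v u w : Vec d) : inner (vsub v u) w = inner v w - inner u w.
Proof. rewrite /inner -sumR_sub; apply: sumR_ext => i; rewrite /vsub; ring. Qed.

Lemma closure_inner (X : Vec d -> Prop) (v w : Vec d) a :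
  Defs.closure X v -> (forall u, X u -> a <= inner u w) -> a <= inner v w.
Proof.
move=> hc hX; case: (Rle_lt_dec a (inner v w)) => // hlt.
have [del [hdel H]] := inner_small w (proj2 (Rlt_0_minus _ _) hlt).
have [u [hu hn]] := hc (sqrt del) (sqrt_lt_R0 _ hdel).
have := H _ (norm_lt_sq hdel hn); rewrite inner_vsub_l => ha.
have := hX u hu; have := Rabs_def2 _ _ ha; lra.
Qed.

Lemma closure_sum (X : Vec d -> Prop) (v : Vec d) :
  Defs.closure X v -> (forall u, X u -> sumR u = 1) -> sumR v = 1.
Proof.
move=> hc hX.
have E : forall u : Vec d, inner u (fun _ => 1) = sumR u.
  by move=> u; apply: sumR_ext => i; ring.
have E' : forall u : Vec d, inner u (fun _ => -1) = - sumR u.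
  by move=> u; rewrite /inner -sumR_opp; apply: sumR_ext => i; ring.
have h1 := closure_inner (w := fun _ => 1) (a := 1) hc (fun u hu => ltac:(rewrite E hX //; lra)).
have h2 := closure_inner (w := fun _ => -1) (a := -1) hc (fun u hu => ltac:(rewrite E' hX //; lra)).
rewrite E in h1; rewrite E' in h2; lra.
Qed.

Lemma inner_tri (a b : Vec d) :
  inner (fun i => a i + b i) (fun i => a i + b i) <= 2 * inner a a + 2 * inner b b.
Proof.
have := inner_ge0 (fun i => a i - b i).
have -> : inner (fun i => a i - b i) (fun i => a i - b i) = inner a a + inner b b - 2 * inner a b.
  by rewrite /inner -sumR_scal -sumR_add -sumR_sub; apply: sumR_ext => i; ring.
have -> : inner (fun i => a i + b i) (fun i => a i + b i) = inner a a + inner b b + 2 * inner a b.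
  by rewrite /inner -sumR_scal -!sumR_add; apply: sumR_ext => i; ring.
lra.
Qed.

Lemma vclosure_closed (X : Vec d -> Prop) v :
  Defs.closure (Defs.closure X) v -> Defs.closure X v.
Proof.
move=> hc eps he.
have he2 : 0 < eps * eps / 4 by nra.
have [u [hu hn]] := hc (sqrt (eps * eps / 4)) (sqrt_lt_R0 _ he2).
have [c [hc' hn']] := hu (sqrt (eps * eps / 4)) (sqrt_lt_R0 _ he2).
exists c; split => //.
apply: sq_lt_norm => //.
have := norm_lt_sq he2 hn; have := norm_lt_sq he2 hn'.
have := inner_tri (vsub v u) (vsub u c).
have -> : (fun i => vsub v u i + vsub u c i) = vsub v c.
  by apply: functional_extensionality => i; rewrite /vsub; ring.
lra.
Qed.

Lemma sub_closure (X : Vec d -> Prop) v : X v -> Defs.closure X v.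
Proof.
move=> hv eps he; exists v; split => //.
apply: sq_lt_norm => //.
rewrite (_ : inner (vsub v v) (vsub v v) = 0); first nra.
rewrite /inner (sumR_ext (g := fun _ => 0)); last by move=> i; rewrite /vsub; ring.
rewrite sumR_const; ring.
Qed.

Lemma conv_inner (S : Vec d -> Prop) (w : Vec d) a c :
  (forall s, S s -> a <= inner s w) -> conv_hull S c -> a <= inner c w.
Proof.
move=> hS [n [wt [av [hw [hs [ha ->]]]]]].
have -> : inner (fun i => sumR (fun k => wt k * av k i)) w = sumR (fun k => wt k * inner (av k) w).
  rewrite /inner.
  rewrite (sumR_ext (f := fun i => sumR (fun k => wt k * av k i) * w i)
     (g := fun i => sumR (fun k => wt k * av k i * w i))); last by move=> i; rewrite sumR_scalr.
  rewrite sumR_swap; apply: sumR_ext => k; rewrite -sumR_scal; apply: sumR_ext => i; ring.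
have : sumR (fun k => wt k * a) <= sumR (fun k => wt k * inner (av k) w).
  apply: sumR_le => k; apply: Rmult_le_compat_l; [exact: hw| exact: hS].
by rewrite sumR_scalr hs Rmult_1_l.
Qed.

Lemma conv_sum (S : Vec d -> Prop) c :
  (forall s, S s -> sumR s = 1) -> conv_hull S c -> sumR c = 1.
Proof.
move=> hS [n [wt [av [hw [hs [ha ->]]]]]].
rewrite sumR_swap (sumR_ext (g := fun k => wt k * 1)); last by move=> k; rewrite sumR_scal hS.
by rewrite sumR_scalr hs Rmult_1_l.
Qed.

Lemma sub_conv (S : Vec d -> Prop) s : S s -> conv_hull S s.
Proof.
move=> hs; exists 1%N, (fun _ => 1), (fun _ => s); split; first by move=> k; lra.
split; first by rewrite sumR_ord1.
split => //.
apply: functional_extensionality => i; rewrite sumR_ord1; ring.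
Qed.

Lemma conv_vcomb (S : Vec d -> Prop) s c t :
  S s -> conv_hull S c -> 0 <= t <= 1 -> conv_hull S (vcomb t s c).
Proof.
move=> hs [n [wt [av [hw [hws [ha ->]]]]]] ht.
exists (n + 1)%N.
exists (fun k => match split k with inl j => (1 - t) * wt j | inr _ => t end).
exists (fun k => match split k with inl j => av j | inr _ => s end).
have SP : forall F : 'I_(n + 1) -> R,
  sumR F = sumR (fun j : 'I_n => F (lshift 1 j)) + F (rshift n ord0).
  move=> F; by rewrite sumR_split_ord sumR_ord1.
split.
  move=> k; case: (split k) => [j|j]; last lra.
  apply: Rmult_le_pos; [lra|exact: hw].
split.
  rewrite SP.
  rewrite (sumR_ext (g := fun j => (1 - t) * wt j)); last by move=> j; rewrite (_ : split (lshift 1 j) = inl j); last exact: (unsplitK (inl j : 'I_n + 'I_1)).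
  rewrite sumR_scal hws.
  have -> : split (rshift n (@ord0 0)) = inr ord0 by exact: (unsplitK (inr ord0)).
  ring.
split.
  by move=> k; case: (split k) => j.
apply: functional_extensionality => i; rewrite /vcomb SP; symmetry.
rewrite (sumR_ext (g := fun j => (1 - t) * (wt j * av j i))); last by move=> j; rewrite (_ : split (lshift 1 j) = inl j); [ring | exact: (unsplitK (inl j : 'I_n + 'I_1))].
rewrite sumR_scal.
have -> : split (rshift n (@ord0 0)) = inr ord0 by exact: (unsplitK (inr ord0)).
ring.
Qed.

Lemma closure_vcomb (S : Vec d -> Prop) s p t :
  S s -> Defs.closure (conv_hull S) p -> 0 <= t <= 1 ->
  Defs.closure (conv_hull S) (vcomb t s p).
Proof.
move=> hs hp ht eps he.
have he2 : 0 < eps * eps by nra.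
have [c [hc hn]] := hp (sqrt (eps * eps)) (sqrt_lt_R0 _ he2).
exists (vcomb t s c); split; first exact: conv_vcomb.
apply: sq_lt_norm => //.
have := norm_lt_sq he2 hn.
have -> : inner (vsub (vcomb t s p) (vcomb t s c)) (vsub (vcomb t s p) (vcomb t s c))
  = (1 - t) * (1 - t) * inner (vsub p c) (vsub p c).
  by rewrite /inner -sumR_scal; apply: sumR_ext => i; rewrite /vsub /vcomb; ring.
have := inner_ge0 (vsub p c).
have : (1 - t) * (1 - t) <= 1 by nra.
nra.
Qed.

End Lim.

Lemma entries_small d (a b : Vec d) del : 0 < del ->
  (forall i, Rabs (a i - b i) < Rmin 1 (del / (INR (d * d) + 1))) ->
  inner (vsub a b) (vsub a b) < del.
Proof.
move=> hd H; set e := Rmin 1 _ in H.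
have e1 : e <= 1 := Rmin_l _ _.
have e2 : e <= del / (INR (d * d) + 1) := Rmin_r _ _.
have n0 : 0 <= INR (d * d) := pos_INR _.
have hsq : forall i, vsub a b i * vsub a b i <= del / (INR (d * d) + 1).
  move=> i; have := Rabs_def2 _ _ (H i); rewrite /vsub => [[h1 h2]].
  have : 0 < e by lra.
  nra.
apply: (Rle_lt_trans _ (sumR (fun _ : Idx d => del / (INR (d * d) + 1)))); first exact: sumR_le.
rewrite sumR_const.
have -> : INR (d * d) * (del / (INR (d * d) + 1)) = del - del / (INR (d * d) + 1) by field; lra.
have : 0 < del / (INR (d * d) + 1) by apply: Rdiv_lt_0_compat; lra.
lra.
Qed.

Lemma Rmin_pos1 x : 0 < x -> 0 < Rmin 1 x.
Proof. move=> h; apply: Rmin_pos => //; lra. Qed.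

Lemma sq_bound x B : x * x <= B -> - (Rabs B + 1) <= x /\ x <= Rabs B + 1.
Proof. move=> h; have := Rle_abs B; split; nra. Qed.

Lemma pos_e n del : 0 < del -> 0 < Rmin 1 (del / (INR n + 1)).
Proof. move=> h; apply: Rmin_pos1; apply: Rdiv_lt_0_compat => //; have := pos_INR n; lra. Qed.

Lemma sq_pos eps : 0 < eps -> 0 < eps * eps.
Proof. move=> h; nra. Qed.

Lemma sq_nn x : 0 <= x * x.
Proof. nra. Qed.

Module EVTm.
From mathcomp Require Import all_order all_algebra all_classical all_reals all_analysis.
From mathcomp Require Import Rstruct Rstruct_topology.
Import Order.TTheory GRing.Theory Num.Theory Num.Def.
Local Open Scope classical_set_scope.
Local Open Scope R_scope.

Lemma entry_le n (v : 'rV[R]_n) i : (`|v ord0 i| <= `|v|)%R.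
Proof.
by rewrite [leRHS]/normr /= mx_normrE; apply/bigmax_geP; right => /=; exists (ord0, i).
Qed.

Lemma ball_entry n (v w : 'rV[R]_n) e : ball v e w -> forall i, Rabs (v ord0 i - w ord0 i) < e.
Proof.
rewrite mx_norm_ball /ball_ => h i; apply/Rstruct.RltP; rewrite RabsE.
apply: (le_lt_trans _ h); have E := entry_le (v - w) i; rewrite !mxE in E; exact: E.
Qed.

Lemma evt d (X : Vec d -> Prop) (F : Vec d -> R) :
  (exists x, X x) ->
  (forall v, Defs.closure X v -> X v) ->
  (exists B, forall x, X x -> Defs.inner x x <= B) ->
  (forall x eps, 0 < eps -> exists del, 0 < del /\
     forall y, Defs.inner (vsub y x) (vsub y x) < del -> Rabs (F y - F x) < eps) ->
  exists x, X x /\ forall y, X y -> F y <= F x.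
Proof.
move=> [x0 hx0] Xcl [B HB] HF.
pose toV (v : 'rV[R]_(d * d)) : Vec d := fun i => v ord0 i.
pose ofV (x : Vec d) : 'rV[R]_(d * d) := (\row_i x i)%R.
have toVK : forall x, toV (ofV x) = x.
  by move=> x; apply: functional_extensionality => i; rewrite /toV /ofV mxE.
pose A := [set v : 'rV[R]_(d * d) | X (toV v)].
pose M := (Rabs B + 1)%R.
have A0 : A !=set0 by exists (ofV x0); rewrite /A /= toVK.
have Abox : A `<=` [set v : 'rV[R]_(d * d) | forall i, `[(- M)%R, M]%classic (v ord0 i)].
  move=> v Av i /=; rewrite in_itv /=.
  have h := HB _ Av.
  have nn : forall j, 0 <= toV v j * toV v j by move=> j; exact: sq_nn.
  have := sumR_term_le (f := fun j => toV v j * toV v j) i nn.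
  rewrite -/(Defs.inner (toV v) (toV v)) /toV => hi.
  have [b1 b2] := sq_bound (Rle_trans _ _ _ hi h).
  apply/andP; split; apply/Rstruct.RleP; [exact: b1|exact: b2].
have Acl : closed A.
  move=> v hv; apply: Xcl => eps he.
  have hd2 : 0 < eps * eps by exact: sq_pos.
  pose e := Rmin 1 (eps * eps / (INR (d * d) + 1)).
  have epos : 0 < e by exact: pos_e.
  have [w [Aw bw]] := hv _ (nbhsx_ballx v e (ltac:(apply/Rstruct.RltP; exact: epos))).
  exists (toV w); split => //.
  apply: sq_lt_norm => //; apply: entries_small => // i.
  exact: ball_entry bw i.
have cA : compact A.
  apply: (subclosed_compact Acl _ Abox).
  apply: (@rV_compact _ _ (fun _ => `[(- M)%R, M]%classic)) => _; exact: segment_compact.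
have cF : {within A, continuous (F \o toV)}.
  apply: continuous_subspaceT => v; rewrite /continuous_at; apply: (proj2 (@pseudometric_normed_Zmodule.cvgrPdist_lt _ R^o _ _ (nbhs_filter v) _ _)) => eps /Rstruct.RltP he.
  have [del [hdel H]] := HF (toV v) eps he.
  pose e := Rmin 1 (del / (INR (d * d) + 1)).
  have epos : 0 < e by exact: pos_e.
  apply/nbhs_ballP; exists e; first exact/Rstruct.RltP.
  move=> t /= bt.
  have := H (toV t); rewrite -RabsE Rabs_minus_sym => h; apply/Rstruct.RltP; apply: h.
  apply: entries_small => // i; rewrite Rabs_minus_sym; exact: ball_entry bt i.
have [c Ac Hc] := EVT_max_rV A0 cA cF.
exists (toV c); split; first by move: Ac; rewrite inE.
move=> y hy; have := Hc (ofV y); rewrite /= toVK => h; apply/Rstruct.RleP; apply: h.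
by rewrite inE /A /= toVK.
Qed.

End EVTm.



Lemma orth_comm d (A : Mat d) : mmul A (mtr A) = @mid d -> mmul (mtr A) A = @mid d.
Proof.
move=> H.
pose M : 'M[R]_(d*d) := (\matrix_(i, j) A i j)%R.
have HM : (M *m M^T = 1%:M)%R.
  apply/matrixP => i j; rewrite !mxE.
  have E := f_equal (fun F => F i j) H; simpl in E.
  transitivity (mmul A (mtr A) i j).
    rewrite /mmul /sumR; apply: eq_bigr => k _; by rewrite !mxE.
  rewrite E /mid; by case: (i == j).
have HM' := mulmx1C HM.
apply: functional_extensionality => i; apply: functional_extensionality => j.
have := congr1 (fun X : 'M[R]_(d*d) => X i j) HM'; rewrite /= !mxE => E.
rewrite /mmul /mtr /mid /sumR.
transitivity (\sum_(k < d * d) M^T i k * M k j)%R.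
  apply: eq_bigr => k _; by rewrite !mxE.
rewrite E; case: (i == j) => //.
Qed.




Section PartA.
Variable d : nat.
Hypothesis hd : (2 <= d)%N.
Variable Q : Vec d -> Prop.
Hypothesis hQ : qplex Q.
Local Notation N := (dR d).

Definition Good (A : Mat d) : Prop :=
  (forall i j, A i j >= - (1 / N)) /\
  (forall i, sumR (fun j => A i j) = 1) /\
  (forall j, sumR (fun i => A i j) = 1) /\
  (forall p, Q p <-> exists q, Q q /\ p = mapply A q).

Section Meas.
Variable r : Mat d.
Hypothesis hr : measurement r.
Hypothesis hp : Q_preserving Q r.

Let m i := sumR (fun j => r i j).
Let row i : Vec d := fun j => r i j.

Lemma qr_eq q i : q_r r q i = (N + 1) * inner q (row i) - m i / N.
Proof.
rewrite /q_r /inner /m /row /Rdiv -sumR_scal -sumR_scalr -sumR_sub; apply: sumR_ext => j; ring.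
Qed.

Lemma qr_nonneg q i : Q q -> (N + 1) * inner q (row i) >= m i / N.
Proof.
move=> hq; have hQr : Q (q_r r q) by apply/hp; exists q.
have := (Q_simplex hQ hQr).1 i; rewrite qr_eq; lra.
Qed.

Lemma m_ge0 i : 0 <= m i.
Proof. apply: sumR_ge0 => j; exact: hr.1. Qed.

Lemma inner_row_ub q i : Q q -> inner q (row i) <= 2 * kk d * m i.
Proof.
move=> hq; have h2 := N_ge2 hd.
case: (Rle_lt_dec (m i) 0) => hm.
- have m0 : m i = 0 by have := m_ge0 i; lra.
  have z := sumR_eq0 (fun j => hr.1 i j) m0.
  rewrite /inner (sumR_ext (g := fun _ => 0)); last by move=> j; rewrite /row z; ring.
  rewrite sumR_const m0; lra.
- pose s : Vec d := fun j => r i j / m i.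
  have hs : Q s.
    apply: (Q_intro hQ).
      by rewrite /s /Rdiv sumR_scalr -/(m i); field; lra.
    move=> v hv; have := qr_nonneg i hv.
    have -> : inner s v = inner v (row i) / m i.
      by rewrite /inner /s /row /Rdiv -sumR_scalr; apply: sumR_ext => j; ring.
    rewrite /kk => h.
    have hx : m i / (N * (N+1)) <= inner v (row i).
      apply: (Rmult_le_reg_l (N+1)); first lra.
      have : (N + 1) * (m i / (N * (N + 1))) = m i / N by field; lra.
      move=> ->; lra.
    apply: Rle_ge; apply: (Rmult_le_reg_r (m i)) => //.
    have -> : inner v (row i) / m i * m i = inner v (row i) by field; lra.
    have -> : 1 / (N * (N+1)) * m i = m i / (N * (N+1)) by field; lra.
    exact hx.
  have := Q_inner_ub hd hQ hq hs.
  have -> : inner q s = inner q (row i) / m i.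
    by rewrite /inner /s /row /Rdiv -sumR_scalr; apply: sumR_ext => j; ring.
  move=> h; have : inner q (row i) = (inner q (row i) / m i) * m i by field; lra.
  move=> ->; apply: Rmult_le_compat_r; lra.
Qed.

Lemma fvec_pre k : exists q, Q q /\ fvec k = q_r r q.
Proof. apply/hp; exact: (fvec_in_Q hd hQ). Qed.

Lemma fvec_kk (k : Idx d) : fvec k k = 1 / N.
Proof. have h2 := N_ge2 hd. rewrite /fvec /mid eqxx; field; lra. Qed.

Lemma m_ge1 k : 1 <= m k.
Proof.
have h2 := N_ge2 hd.
case: (fvec_pre k) => q [hq E].
have := f_equal (fun F => F k) E; rewrite /= fvec_kk qr_eq => E'.
have := inner_row_ub k hq; rewrite /kk => h.
have : (N + 1) * inner q (row k) <= 2 / N * m k.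
  have : (N + 1) * (2 * (1 / (N * (N + 1))) * m k) = 2 / N * m k by field; lra.
  move=> <-; apply: Rmult_le_compat_l; lra.
move=> h'; have : 1 / N <= m k / N by rewrite E'; move: h'; rewrite /Rdiv; lra.
move=> h''; apply: (Rmult_le_reg_r (/ N)); first by apply: Rinv_0_lt_compat; lra.
move: h''; rewrite /Rdiv; lra.
Qed.

Lemma m_eq1 k : m k = 1.
Proof.
have S : sumR (fun i => m i - 1) = 0.
  rewrite sumR_sub /m sumR_swap (sumR_ext (g := fun _ => 1)); last by move=> j; exact: hr.2.
  by rewrite sumR_const; ring.
have H0 : forall i, 0 <= m i - 1 by move=> i; have := m_ge1 i; lra.
have := sumR_eq0 (f := fun i => m i - 1) H0 S k; lra.
Qed.

Lemma row_in_Q k : Q (row k).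
Proof.
have h2 := N_ge2 hd.
apply: (Q_intro hQ); first exact: m_eq1.
move=> v hv; have := qr_nonneg k hv; rewrite m_eq1 inner_sym /kk => h.
apply: Rle_ge; apply: (Rmult_le_reg_l (N + 1)); first lra.
have : (N + 1) * (1 / (N * (N + 1))) = 1 / N by field; lra.
move=> ->; lra.
Qed.

Lemma row_gram k i : fvec k i = (N + 1) * inner (row k) (row i) - 1 / N.
Proof.
have h2 := N_ge2 hd.
case: (fvec_pre k) => q [hq E].
have := f_equal (fun F => F k) E; rewrite /= fvec_kk qr_eq m_eq1 => E'.
have hi : inner q (row k) = 2 * kk d.
  have e2 : (N + 1) * (2 * (1 / (N * (N + 1)))) = 2 / N by field; lra.
  rewrite /kk; apply: (Rmult_eq_reg_l (N + 1)); last lra.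
  rewrite e2; move: E'; rewrite /Rdiv; lra.
have qe : q = row k.
  apply: inner_eq0; rewrite inner_vsub.
  have := Q_norm hd hQ hq; have := Q_norm hd hQ (row_in_Q k); lra.
subst q; rewrite E qr_eq m_eq1 //.
Qed.

Lemma stretched_eq i j : stretched r i j = (N + 1) * r i j - 1 / N.
Proof. rewrite /stretched -/(m i) m_eq1; ring. Qed.

Lemma stretched_AAt : mmul (stretched r) (mtr (stretched r)) = @mid d.
Proof.
have h2 := N_ge2 hd.
apply: functional_extensionality => i; apply: functional_extensionality => k.
rewrite /mmul /mtr.
rewrite (sumR_ext (g := fun j => (N+1)*(N+1) * (r i j * r k j) + (- (N+1)/N) * r i j
   + (- (N+1)/N) * r k j + 1 / (N * N))); last by move=> j; rewrite !stretched_eq; field; lra.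
rewrite !sumR_add !sumR_scal sumR_const nN -/(m i) -/(m k) !m_eq1.
have G := row_gram k i; rewrite inner_sym /inner /row in G.
have : sumR (fun j => r i j * r k j) = (fvec k i + 1 / N) / (N + 1) by rewrite G; field; lra.
move=> ->; rewrite /fvec /mid eq_sym; case: (i == k); field; lra.
Qed.

Lemma qr_mapply q : Q q -> q_r r q = mapply (stretched r) q.
Proof.
move=> hq; apply: functional_extensionality => i.
have S := (Q_simplex hQ hq).2.
rewrite qr_eq m_eq1 /mapply.
rewrite (sumR_ext (g := fun j => (N+1) * (r i j * q j) + (- (1/N)) * q j)); last first.
  by move=> j; rewrite stretched_eq; ring.
rewrite sumR_add !sumR_scal S /inner /row; rewrite (sumR_ext (f := fun j => q j * r i j) (g := fun j => r i j * q j)) //.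
  ring.
by move=> j; ring.
Qed.

Lemma pres_good_aux : Good (stretched r) /\ Defs.orthogonal (stretched r).
Proof.
have h2 := N_ge2 hd.
split; last by apply: orth_comm; exact: stretched_AAt.
split; [|split; [|split]].
- move=> i j; rewrite stretched_eq; have := hr.1 i j; nra.
- move=> i; rewrite (sumR_ext (g := fun j => (N+1) * r i j + (- (1/N)))); last by move=> j; rewrite stretched_eq; ring.
  rewrite sumR_add sumR_scal sumR_const nN -/(m i) m_eq1; field; lra.
- move=> j; rewrite (sumR_ext (g := fun i => (N+1) * r i j + (- (1/N)))); last by move=> i; rewrite stretched_eq; ring.
  rewrite sumR_add sumR_scal sumR_const nN hr.2; field; lra.
- move=> p; split.
  + move/hp => [q [hq ->]]; exists q; split => //; exact: qr_mapply.
  + move=> [q [hq ->]]; apply/hp; exists q; split => //; by rewrite qr_mapply.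
Qed.

End Meas.

Lemma pres_good A : pres_group Q A -> Good A /\ Defs.orthogonal A.
Proof. move=> [r [hr [hp ->]]]; exact: pres_good_aux. Qed.

Lemma good_pres A : Good A -> pres_group Q A.
Proof.
have h2 := N_ge2 hd.
move=> [Hge [Hrow [Hcol Hmap]]].
pose r : Mat d := fun i j => (N * A i j + 1) / (N * (N + 1)).
have qrE : forall q, Q q -> q_r r q = mapply A q.
  move=> q hq; apply: functional_extensionality => i.
  have S := (Q_simplex hQ hq).2.
  rewrite /q_r /r /mapply.
  rewrite (sumR_ext (g := fun j => A i j * q j + (1/N) * q j + (- (1/(N*(N+1)))) * A i j
     + (- (1 / (N * N * (N+1)))))); last by move=> j; field; lra.
  rewrite !sumR_add !sumR_scal sumR_const nN S Hrow; field; lra.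
exists r; split; [split|split].
- move=> i j; rewrite /r; have := Hge i j => h.
  apply: Rmult_le_pos; last by apply: Rlt_le; apply: Rinv_0_lt_compat; nra.
  have : N * A i j >= N * (- (1 / N)) by apply: Rle_ge; apply: Rmult_le_compat_l; lra.
  have : N * (- (1 / N)) = -1 by field; lra.
  lra.
- move=> j; rewrite /r /Rdiv sumR_scalr.
  rewrite sumR_add sumR_scal sumR_const nN Hcol.
  field; lra.
- move=> p; split.
  + move/Hmap => [q [hq ->]]; exists q; split => //; by rewrite qrE.
  + move=> [q [hq ->]]; apply/Hmap; exists q; split => //; by rewrite qrE.
- apply: functional_extensionality => i; apply: functional_extensionality => j.
  rewrite /stretched /r /Rdiv sumR_scalr.
  rewrite sumR_add sumR_scal sumR_const nN Hrow.
  field; lra.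
Qed.

End PartA.




Section Mat.
Variable d : nat.
Implicit Types A B C : Mat d.

Lemma mapply_mmul A B (q : Vec d) : mapply (mmul A B) q = mapply A (mapply B q).
Proof.
apply: functional_extensionality => i; rewrite /mapply /mmul.
rewrite (sumR_ext (f := fun j => sumR (fun k => A i k * B k j) * q j)
   (g := fun j => sumR (fun k => A i k * B k j * q j))); last by move=> j; rewrite sumR_scalr.
rewrite sumR_swap; apply: sumR_ext => k; rewrite -sumR_scal; apply: sumR_ext => j; ring.
Qed.

Lemma mtr_mmul A B : mtr (mmul A B) = mmul (mtr B) (mtr A).
Proof.
apply: functional_extensionality => i; apply: functional_extensionality => j.
rewrite /mtr /mmul; apply: sumR_ext => k; ring.
Qed.

Lemma mtr_mtr A : mtr (mtr A) = A.
Proof. by []. Qed.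

Lemma mapply_mid (q : Vec d) : mapply (@mid d) q = q.
Proof.
apply: functional_extensionality => i; rewrite /mapply /mid.
exact: sumR_delta'.
Qed.

Lemma orth_left A (q : Vec d) : Defs.orthogonal A -> mapply (mtr A) (mapply A q) = q.
Proof. by move=> H; rewrite -mapply_mmul H mapply_mid. Qed.

Lemma orth_right_eq A : Defs.orthogonal A -> mmul A (mtr A) = @mid d.
Proof. move=> H; exact: (orth_comm (A := mtr A)). Qed.

Lemma orth_right A (q : Vec d) : Defs.orthogonal A -> mapply A (mapply (mtr A) q) = q.
Proof. by move=> H; rewrite -mapply_mmul orth_right_eq // mapply_mid. Qed.

Lemma inner_mtr A (u v : Vec d) : inner (mapply (mtr A) u) v = inner u (mapply A v).
Proof.
rewrite /inner /mapply /mtr.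
rewrite (sumR_ext (f := fun i => sumR (fun j => A j i * u j) * v i)
   (g := fun i => sumR (fun j => A j i * u j * v i))); last by move=> i; rewrite sumR_scalr.
rewrite sumR_swap; apply: sumR_ext => j; rewrite -sumR_scal; apply: sumR_ext => i; ring.
Qed.

Lemma sum_mapply A (v : Vec d) : (forall j, sumR (fun i => A i j) = 1) ->
  sumR (mapply A v) = sumR v.
Proof.
move=> H; rewrite /mapply sumR_swap; apply: sumR_ext => j.
by rewrite sumR_scalr H Rmult_1_l.
Qed.

Lemma rowsum_mmul A B : (forall i, sumR (fun j => A i j) = 1) -> (forall i, sumR (fun j => B i j) = 1) ->
  forall i, sumR (fun j => mmul A B i j) = 1.
Proof.
move=> HA HB i; rewrite /mmul sumR_swap.
rewrite (sumR_ext (g := fun k => A i k * 1)); last by move=> k; rewrite sumR_scal HB.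
rewrite sumR_scalr HA; ring.
Qed.

Lemma colsum_mmul A B : (forall j, sumR (fun i => A i j) = 1) -> (forall j, sumR (fun i => B i j) = 1) ->
  forall j, sumR (fun i => mmul A B i j) = 1.
Proof.
move=> HA HB j; rewrite /mmul sumR_swap.
rewrite (sumR_ext (g := fun k => 1 * B k j)); last by move=> k; rewrite sumR_scalr HA.
rewrite sumR_scal HB; ring.
Qed.

End Mat.

Section PartB.
Variable d : nat.
Hypothesis hd : (2 <= d)%N.
Variable Q : Vec d -> Prop.
Hypothesis hQ : qplex Q.
Local Notation N := (dR d).
Local Notation Good := (Good Q).

Lemma mapply_fvec (C : Mat d) (i j : Idx d) :
  mapply C (fvec j) i = (N * C i j + sumR (fun l => C i l)) / (N * (N + 1)).
Proof.
have h2 := N_ge2 hd.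
rewrite /mapply /fvec.
rewrite (sumR_ext (g := fun l => (N / (N * (N+1))) * ((if j == l then 1 else 0) * C i l) +
   (1 / (N * (N+1))) * C i l)); last by move=> l; rewrite /mid; field; lra.
rewrite sumR_add !sumR_scal sumR_delta' (_ : sumR (C i) = sumR (fun l => C i l)) //; field; lra.
Qed.

Lemma inner_fvec_D (D : Mat d) (i j : Idx d) :
  (forall i, sumR (fun j => D i j) = 1) -> (forall j, sumR (fun i => D i j) = 1) ->
  inner (fvec j) (mapply D (fvec i)) = (N * ((N * D j i + 1) / (N * (N + 1))) + 1) / (N * (N + 1)).
Proof.
move=> Hr Hc; rewrite (inner_fvec hd) mapply_fvec Hr sum_mapply // (sum_fvec hd) //.
Qed.

Lemma inner_fvec_D_ge (D : Mat d) (i j : Idx d) :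
  (forall i, sumR (fun j => D i j) = 1) -> (forall j, sumR (fun i => D i j) = 1) ->
  (inner (fvec j) (mapply D (fvec i)) >= kk d <-> D j i >= - (1 / N)).
Proof.
have h2 := N_ge2 hd.
move=> Hr Hc; rewrite inner_fvec_D // /kk.
have E : (N * ((N * D j i + 1) / (N * (N + 1))) + 1) / (N * (N + 1)) - 1 / (N * (N + 1))
   = (D j i + 1 / N) * (1 / ((N + 1) * (N + 1))) by field; lra.
have P : 0 < 1 / ((N + 1) * (N + 1)) by apply: Rdiv_lt_0_compat; nra.
split => h.
- have : 0 <= (D j i + 1 / N) * (1 / ((N + 1) * (N + 1))) by rewrite -E; lra.
  move=> h'; have : 0 <= D j i + 1 / N by nra.
  lra.
- have : 0 <= (D j i + 1 / N) * (1 / ((N + 1) * (N + 1))) by apply: Rmult_le_pos; lra.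
  rewrite -E; lra.
Qed.

Lemma entry_lb (C : Mat d) :
  (forall i, sumR (fun j => C i j) = 1) -> (forall j, sumR (fun i => C i j) = 1) ->
  (forall q, Q q -> Q (mapply C q)) -> forall i j, C i j >= - (1 / N).
Proof.
move=> Hr Hc Hm i j; apply/(inner_fvec_D_ge j i Hr Hc).
apply: (Q_inner_lb hQ); [exact: (fvec_in_Q hd hQ) | apply: Hm; exact: (fvec_in_Q hd hQ)].
Qed.

Lemma good_maps A q : Good A -> Q q -> Q (mapply A q).
Proof. move=> [_ [_ [_ H]]] hq; apply/H; by exists q. Qed.

Lemma good_mid : Good (@mid d).
Proof.
have h2 := N_ge2 hd.
split; [|split; [|split]].
- move=> i j; have h : 0 < 1 / N by apply: Rdiv_lt_0_compat; lra.
  rewrite /mid; case: (i == j) => /=; lra.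
- move=> i; apply: (eq_trans _ (sumR_delta' (fun _ : Idx d => 1) i)).
  apply: sumR_ext => j; rewrite /mid; ring.
- move=> j; apply: (eq_trans _ (sumR_delta (fun _ : Idx d => 1) j)).
  apply: sumR_ext => i; rewrite /mid; ring.
- move=> p; split; first by move=> hp; exists p; rewrite mapply_mid.
  by move=> [q [hq ->]]; rewrite mapply_mid.
Qed.

Lemma good_mmul A B : Good A -> Good B -> Good (mmul A B).
Proof.
move=> hA hB.
have HA := hA; have HB := hB.
case: hA => _ [rA [cA mA]]; case: hB => _ [rB [cB mB]].
have rAB := rowsum_mmul rA rB; have cAB := colsum_mmul cA cB.
have mAB : forall q, Q q -> Q (mapply (mmul A B) q).
  by move=> q hq; rewrite mapply_mmul; apply: good_maps => //; apply: good_maps.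
split; [exact: entry_lb|split; [exact: rAB|split; [exact: cAB|]]].
move=> p; split; last by move=> [q [hq ->]]; exact: mAB.
move/mA => [q1 [h1 ->]]; move/mB: h1 => [q2 [h2 ->]].
by exists q2; rewrite mapply_mmul.
Qed.

Lemma good_mtr A : Good A -> Defs.orthogonal A -> Good (mtr A).
Proof.
move=> hA hO; have HA := hA; case: hA => e [r [c m]].
split; [|split; [|split]].
- move=> i j; exact: e.
- exact: c.
- exact: r.
- move=> p; split.
  + move=> hp; exists (mapply A p); split; first exact: good_maps.
    by rewrite orth_left.
  + move=> [q [hq ->]]; move/m: hq => [q' [hq' ->]]; by rewrite orth_left.
Qed.

Lemma G_good A : pres_group Q A -> Good A.
Proof. move=> h; exact: (pres_good hd hQ h).1. Qed.
Lemma G_orth A : pres_group Q A -> Defs.orthogonal A.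
Proof. move=> h; exact: (pres_good hd hQ h).2. Qed.

Lemma G_mid : pres_group Q (@mid d).
Proof. apply: (good_pres hd hQ); exact: good_mid. Qed.
Lemma G_mmul A B : pres_group Q A -> pres_group Q B -> pres_group Q (mmul A B).
Proof. move=> hA hB; apply: (good_pres hd hQ); apply: good_mmul; exact: G_good. Qed.
Lemma G_mtr A : pres_group Q A -> pres_group Q (mtr A).
Proof. move=> hA; apply: (good_pres hd hQ); apply: good_mtr; [exact: G_good|exact: G_orth]. Qed.

Lemma rowsum_cvec (A : Mat d) : (forall i, sumR (fun j => A i j) = 1) -> mapply A (@cvec d) = @cvec d.
Proof.
move=> H; apply: functional_extensionality => i; rewrite /mapply /cvec sumR_scalr H; ring.
Qed.

Lemma G_stochastic : stochastic (pres_group Q).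
Proof.
split.
- split; first exact: G_orth.
  split; first exact: G_mid.
  split; first exact: G_mmul.
  exact: G_mtr.
- move=> A hA; case: (G_good hA) => e [r _]; split => //; exact: rowsum_cvec.
Qed.

Lemma germ_eq (A : Mat d) (i : Idx d) : (forall j, sumR (fun i => A i j) = 1) ->
  (fun j => (N * A i j + 1) / (N * (N + 1))) = mapply (mtr A) (fvec i).
Proof.
move=> Hc; apply: functional_extensionality => j.
rewrite mapply_fvec /mtr Hc //.
Qed.

Lemma germ_in_Q s : orbital_germ (pres_group Q) s -> Q s.
Proof.
move=> [A [i [hA ->]]].
have hG := G_good hA; case: (hG) => _ [_ [c _]].
rewrite germ_eq //; apply: good_maps; last exact: (fvec_in_Q hd hQ).
apply: good_mtr => //; exact: G_orth.
Qed.

End PartB.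




Definition Gq (d : nat) (a : Vec d) (c : R) (x : Vec d) : R := inner a x + c * inner x x.

Lemma Gq_diff d (a : Vec d) c x y :
  Gq a c y - Gq a c x = inner (vsub y x) (fun i => a i + 2 * c * x i) + c * inner (vsub y x) (vsub y x).
Proof.
rewrite /Gq /inner -!sumR_scal -!sumR_add -sumR_sub; apply: sumR_ext => i; rewrite /vsub; ring.
Qed.

Lemma Gq_cont d (a : Vec d) c : forall x eps, 0 < eps -> exists del, 0 < del /\
     forall y, inner (vsub y x) (vsub y x) < del -> Rabs (Gq a c y - Gq a c x) < eps.
Proof.
move=> x eps he.
have he2 : 0 < eps / 2 by lra.
have [d1 [hd1 H1]] := inner_small (fun i => a i + 2 * c * x i) he2.
have hc : 0 < Rabs c + 1 by have := Rabs_pos c; lra.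
exists (Rmin d1 (eps / 2 / (Rabs c + 1))); split.
  apply: Rmin_pos => //; apply: Rdiv_lt_0_compat; lra.
move=> y hy; rewrite Gq_diff.
have hy1 : inner (vsub y x) (vsub y x) < d1 by have := Rmin_l d1 (eps / 2 / (Rabs c + 1)); lra.
have hy2 : inner (vsub y x) (vsub y x) < eps / 2 / (Rabs c + 1)
  by have := Rmin_r d1 (eps / 2 / (Rabs c + 1)); lra.
have h1 := H1 _ hy1.
have h0 := inner_ge0 (vsub y x).
have h2 : Rabs (c * inner (vsub y x) (vsub y x)) < eps / 2.
  rewrite Rabs_mult (Rabs_right (inner _ _)); last lra.
  have : (Rabs c + 1) * inner (vsub y x) (vsub y x) < eps / 2.
    have : (Rabs c + 1) * (eps / 2 / (Rabs c + 1)) = eps / 2 by field; lra.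
    move=> <-; apply: Rmult_lt_compat_l => //.
  have := Rabs_pos c; nra.
have := Rabs_triang (inner (vsub y x) (fun i => a i + 2 * c * x i)) (c * inner (vsub y x) (vsub y x)).
lra.
Qed.

Lemma Gq_vcomb d (a : Vec d) c (u v : Vec d) t :
  Gq a c (vcomb t u v) = t * Gq a c u + (1 - t) * Gq a c v - c * t * (1 - t) * inner (vsub u v) (vsub u v).
Proof. rewrite /Gq inner_vcomb_r inner_vcomb; ring. Qed.

Lemma closure_mono d (X Y : Vec d -> Prop) v : (forall u, X u -> Y u) -> Defs.closure X v -> Defs.closure Y v.
Proof. move=> H hc eps he; have [u [hu hn]] := hc eps he; exists u; split => //; exact: H. Qed.

Section Final.
Variable d : nat.
Hypothesis hd : (2 <= d)%N.
Variable Q : Vec d -> Prop.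
Hypothesis hQ : qplex Q.
Hypothesis hS : single_orbit (pres_group Q) Q.
Local Notation N := (dR d).
Local Notation S := (orbital_germ (pres_group Q)).
Local Notation P := (closed_conv_hull S).

Lemma i0P : (0 < d * d)%N.
Proof. by rewrite muln_gt0 andbb; apply: leq_trans hd. Qed.
Definition i0 : Idx d := Ordinal i0P.

Lemma Q_closed v : Defs.closure Q v -> Q v.
Proof.
move=> hc; apply: (Q_intro hQ).
  by apply: (closure_sum hc) => u hu; exact: (Q_simplex hQ hu).2.
move=> w hw; apply: Rle_ge; apply: (closure_inner hc) => u hu.
apply: Rge_le; exact: (Q_inner_lb hQ).
Qed.

Lemma fvec_germ (i : Idx d) : S (fvec i).
Proof. exists (@mid d), i; split => //; exact: (G_mid hd hQ). Qed.

Lemma conv_sub_Q v : conv_hull S v -> Q v.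
Proof.
move=> hc; apply: (Q_intro hQ).
  by apply: (conv_sum _ hc) => s hs; exact: (Q_simplex hQ (germ_in_Q hd hQ hs)).2.
move=> w hw; apply: Rle_ge; apply: (conv_inner _ hc) => s hs.
apply: Rge_le; apply: (Q_inner_lb hQ) => //; exact: (germ_in_Q hd hQ).
Qed.

Lemma P_sub_Q v : P v -> Q v.
Proof. move=> hv; apply: Q_closed; apply: (closure_mono _ hv); exact: conv_sub_Q. Qed.

Lemma extreme_germ x : extreme_point Q x -> S x.
Proof.
case: hS => q0 [hq0 Horb] hx.
have fext : extreme_point Q (fvec i0).
  apply: (maxnorm_extreme hd hQ); [exact: (fvec_in_Q hd hQ) | exact: (fvec_norm hd)].
have [A [hA EA]] := (Horb _).1 fext.
have [B [hB EB]] := (Horb _).1 hx.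
have q0E : q0 = mapply (mtr A) (fvec i0) by rewrite EA orth_left //; exact: (G_orth hd hQ).
pose C := mmul A (mtr B).
have hC : pres_group Q C by apply: (G_mmul hd hQ) => //; exact: (G_mtr hd hQ).
exists C, i0; split => //.
case: (G_good hd hQ hC) => _ [_ [cC _]].
rewrite (@germ_eq d hd C i0 cC) /C mtr_mmul EB q0E -mapply_mmul //.
Qed.

Lemma KM u : Q u -> P u.
Proof.
move=> hu.
have h2 := N_ge2 hd.
have kp := kk_pos hd.
(* nearest point p *)
have Pne : exists x, P x by exists (fvec i0); rewrite /closed_conv_hull; apply: sub_closure; apply: sub_conv; exact: fvec_germ.
have Pcl : forall v, Defs.closure P v -> P v by move=> v hv; rewrite /closed_conv_hull in hv *; exact: (vclosure_closed hv).
have Pbd : exists B, forall x, P x -> inner x x <= B.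
  by exists (2 * kk d) => x hx; apply: (Q_norm hd hQ); exact: P_sub_Q.
have [p [hp Hp]] := EVTm.evt Pne Pcl Pbd (Gq_cont (fun i => 2 * u i) (-1)).
set w := vsub u p.
have var : forall s, S s -> inner w s <= inner w p.
  move=> s hs.
  set X := inner w (vsub s p); set K := inner (vsub s p) (vsub s p).
  have K0 : 0 <= K := inner_ge0 _.
  have key : forall t, 0 < t <= 1 -> 2 * X <= t * K.
    move=> t ht.
    have hxt : P (vcomb t s p) by apply: closure_vcomb => //; lra.
    have := Hp _ hxt.
    have -> : Gq (fun i => 2 * u i) (-1) (vcomb t s p) =
       Gq (fun i => 2 * u i) (-1) p + 2 * t * X - t * t * K.
      rewrite /Gq /X /K /w /inner -!sumR_scal -!sumR_add -!sumR_sub; apply: sumR_ext => i.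
      rewrite /vcomb /vsub; ring.
    move=> h; nra.
  have Xle : X <= 0.
    case: (Rle_lt_dec X 0) => // hX.
    pose t := Rmin 1 (X / (K + 1)).
    have tpos : 0 < t by apply: Rmin_pos; [lra | apply: Rdiv_lt_0_compat; lra].
    have t1 : t <= 1 := Rmin_l _ _.
    have t2 : t <= X / (K + 1) := Rmin_r _ _.
    have := key t (conj tpos t1).
    have : t * K <= X / (K + 1) * K by apply: Rmult_le_compat_r.
    have : X / (K + 1) * K < X.
      have -> : X / (K + 1) * K = X - X / (K + 1) by field; lra.
      have : 0 < X / (K + 1) by apply: Rdiv_lt_0_compat; lra.
      lra.
    lra.
  have : inner w (vsub s p) = inner w s - inner w p.
    by rewrite /inner -sumR_sub; apply: sumR_ext => i; rewrite /vsub; ring.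
  rewrite -/X; lra.
have Qne : exists x, Q x by exists (fvec i0); exact: (fvec_in_Q hd hQ).
have Qbd : exists B, forall x, Q x -> inner x x <= B by exists (2 * kk d) => x; exact: (Q_norm hd hQ).
have bound : forall eps, 0 < eps -> inner w w <= eps * (2 * kk d).
  move=> eps he.
  have [x [hx Hx]] := EVTm.evt Qne Q_closed Qbd (Gq_cont w eps).
  have xext : extreme_point Q x.
    split => // a b t ha hb ht E.
    have := Hx _ ha; have := Hx _ hb.
    have Ex : x = vcomb t a b by [].
    rewrite Ex Gq_vcomb => h1 h2'.
    have g0 := inner_ge0 (vsub a b).
    have hab : inner (vsub a b) (vsub a b) <= 0.
      case: ht => t0 t1.
      have tp : 0 < eps * t * (1 - t) by apply: Rmult_lt_0_compat; nra.
      nra.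
    have ab := inner_eq0 hab; subst b.
    split; apply: functional_extensionality => i; rewrite /vcomb; ring.
  have hxS := var _ (extreme_germ xext).
  have := Hx _ hu; rewrite /Gq => h.
  have : inner w u - inner w p = inner w w.
    by rewrite /w /inner -sumR_sub; apply: sumR_ext => i; rewrite /vsub; ring.
  have := Q_norm hd hQ hx; have := inner_ge0 u.
  nra.
have w0 : inner w w <= 0.
  case: (Rle_lt_dec (inner w w) 0) => // hw.
  have k4 : 0 < 4 * kk d by lra.
  have := bound (inner w w / (4 * kk d)) (Rdiv_lt_0_compat _ _ hw k4).
  have -> : inner w w / (4 * kk d) * (2 * kk d) = inner w w / 2 by field; lra.
  lra.
have -> : u = p by apply: inner_eq0.
exact: hp.
Qed.

Lemma P_iff v : P v <-> Q v.
Proof. split; [exact: P_sub_Q | exact: KM]. Qed.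

Lemma S_star u : sumR u = 1 -> (forall s, S s -> inner u s >= kk d) -> Q u.
Proof.
move=> hs H; apply: (Q_intro hQ) => // v hv.
apply: Rle_ge; rewrite inner_sym; apply: (closure_inner (KM hv)) => c hc.
apply: (conv_inner _ hc) => s hs'; rewrite inner_sym; apply: Rge_le; exact: H.
Qed.

Lemma P_qplex : qplex P.
Proof.
case: hQ => H1 H2; split.
- move=> q /P_iff hq; exact: H1.
- move=> u; split.
  + move=> [hu hp]; apply/P_iff; apply/H2; split => // v hv; apply: hp; exact/P_iff.
  + move/P_iff/H2 => [hu hp]; split => // v /P_iff hv; exact: hp.
Qed.

Lemma rowsum_of_cvec (A : Mat d) : mapply A (@cvec d) = @cvec d -> forall i, sumR (fun j => A i j) = 1.
Proof.
have h2 := N_ge2 hd.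
move=> H i; have := f_equal (fun f => f i) H; rewrite /mapply /cvec sumR_scalr => E.
have E' : sumR (fun j => A i j) * (1 / (N * N)) = 1 * (1 / (N * N)) by rewrite E; ring.
apply: (Rmult_eq_reg_r (1 / (N * N))) => //.
apply: Rgt_not_eq; apply: Rdiv_lt_0_compat; nra.
Qed.

Lemma colsum_of_orth (A : Mat d) : Defs.orthogonal A -> (forall i, sumR (fun j => A i j) = 1) ->
  forall j, sumR (fun i => A i j) = 1.
Proof.
move=> hO hr j.
have E : sumR (fun i => A i j) = sumR (fun i => A i j * sumR (fun k => A i k)).
  by apply: sumR_ext => i; rewrite hr; ring.
rewrite E.
rewrite (sumR_ext (g := fun i => sumR (fun k => A i j * A i k))); last by move=> i; rewrite sumR_scal.
rewrite sumR_swap.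
have := f_equal (fun f => f j) hO; rewrite /mmul /mtr => Hj.
rewrite (sumR_ext (g := fun k => (@mid d) j k * 1)).
  by apply: (eq_trans _ (sumR_delta' (fun _ : Idx d => 1) j)); apply: sumR_ext => k; rewrite /mid.
by move=> k; rewrite Rmult_1_r; have := f_equal (fun f => f k) Hj.
Qed.

Lemma partC (G' : Mat d -> Prop) : stochastic G' -> (forall A, pres_group Q A -> G' A) ->
  forall A, G' A -> pres_group Q A.
Proof.
move=> [[Gorth [Gmid [Gmul Gtr]]] Gst] Hsub.
have rs : forall D, G' D -> forall i, sumR (fun j => D i j) = 1.
  move=> D hD; exact: rowsum_of_cvec (Gst D hD).2.
have cs : forall D, G' D -> forall j, sumR (fun i => D i j) = 1.
  move=> D hD; apply: colsum_of_orth; [exact: Gorth | exact: rs].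
have germS : forall s, S s -> exists B, pres_group Q B /\ exists i, s = mapply (mtr B) (fvec i).
  move=> s [B [i [hB ->]]]; exists B; split => //; exists i.
  case: (G_good hd hQ hB) => _ [_ [cB _]]; exact: (@germ_eq d hd B i cB).
have C1 : forall D j, G' D -> Q (mapply (mtr D) (fvec j)).
  move=> D j hD; apply: S_star.
    rewrite sum_mapply; first exact: (sum_fvec hd).
    move=> k; exact: rs.
  move=> s /germS [B [hB [i ->]]].
  rewrite inner_mtr -mapply_mmul.
  have hE : G' (mmul D (mtr B)) by apply: Gmul => //; apply: Gtr; exact: Hsub.
  apply/(inner_fvec_D_ge hd); [exact: rs | exact: cs | exact: (Gst _ hE).1].
have C2 : forall A q, G' A -> Q q -> Q (mapply A q).
  move=> A q hA hq; apply: S_star.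
    rewrite sum_mapply; [exact: (Q_simplex hQ hq).2 | exact: cs].
  move=> s /germS [B [hB [i ->]]].
  rewrite inner_sym.
  have -> : inner (mapply (mtr B) (fvec i)) (mapply A q) = inner (mapply (mtr A) (mapply (mtr B) (fvec i))) q.
    by rewrite (inner_mtr A).
  rewrite -mapply_mmul -mtr_mmul inner_sym.
  apply: (Q_inner_lb hQ) => //; apply: C1; apply: Gmul => //; exact: Hsub.
move=> A hA; apply: (good_pres hd hQ).
split; [exact: (Gst A hA).1 | split; [exact: rs | split; [exact: cs|]]].
move=> p; split.
- move=> hp; exists (mapply (mtr A) p); split; first by apply: C2 => //; exact: Gtr.
  by rewrite orth_right //; exact: Gorth.
- move=> [q [hq ->]]; exact: C2.
Qed.

End Final.

Theorem mainTheorem16 (d : nat) (Q : Vec d -> Prop) :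
  (2 <= d)%N -> qplex Q -> single_orbit (pres_group Q) Q ->
  strongly_maximal (pres_group Q).
Proof.
move=> hd hQ hS; split; last exact: (P_qplex hd hQ hS).
split; first exact: (G_stochastic hd hQ).
move=> [G' [st [sub [A [hA nA]]]]]; apply: nA; exact: (partC hd hQ hS st sub hA).
Qed.
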